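(* Let $q$ be a prime power and $\mathcal{L}$ a non-empty set of lines of $\mathrm{PG}(n,q)$ satisfying (Pt), (Pl), (Sd) and (To) (see context). Let $M$ be a $4$-dimensional subspace of $\mathrm{PG}(n,q)$ and let $P$ be a $(q+1)$-$M$-point. Then the plane $\pi_P$ contains at most $q+2$ $(q+1)$-$M$-points.
   Context: (Pt): every point of $\mathrm{PG}(n,q)$ lies on $0$ or $q+1$ lines of $\mathcal{L}$. (Pl): every plane contains $0$, $1$ or $q+1$ lines of $\mathcal{L}$. (Sd): every solid ($3$-dimensional subspace) contains $0$, $1$, $q+1$ or $2q+1$ lines of $\mathcal{L}$. (To): $|\mathcal{L}|\le q^5+q^4+q^3+q^2+q+1$. A point $X$ is a $(q+1)$-$M$-point if exactly $q+1$ lines of $\mathcal{L}$ pass through $X$ and are contained in $M$. For a point $P$ lying on lines of $\mathcal{L}$, $\pi_P$ denotes the subspace spanned by the $q+1$ lines of $\mathcal{L}$ through $P$ (under these hypotheses this is a plane). *)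

(* Defs.v *)
(* PG(n,q) is modelled as the lattice of subspaces of the
   row space F^(n+1) over a finite field F with #|F| = q.  A projective
   subspace of (projective) dimension d is represented canonically by a square
   matrix X with <<X>>%MS = X and \rank X = d+1. *)
From HB Require Import structures.
From mathcomp Require Import all_boot all_order all_algebra all_field.
Set Implicit Arguments. Unset Strict Implicit. Unset Printing Implicit Defensive.
Import GRing.Theory.

Local Open Scope ring_scope.

Section PG.
Variables (F : finFieldType) (n : nat).

Definition psub (d : nat) (X : 'M[F]_n.+1) : bool :=
  (<<X>>%MS == X) && (\rank X == d.+1)%N.

Definition ppoint := psub 0.
Definition pline := psub 1.
Definition pplane := psub 2.
Definition psolid := psub 3.

Definition nlines_in (L : {set 'M[F]_n.+1}) (S : 'M[F]_n.+1) : nat :=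
  #|[set l in L | (l <= S)%MS]|.

Definition nlines_through (L : {set 'M[F]_n.+1}) (X : 'M[F]_n.+1) : nat :=
  #|[set l in L | (X <= l)%MS]|.

Definition qM_point (q : nat) (L : {set 'M[F]_n.+1}) (M X : 'M[F]_n.+1) : bool :=
  ppoint X && (#|[set l in L | (X <= l)%MS && (l <= M)%MS]| == q.+1)%N.

(* pi_P: the subspace spanned by the lines of L through P *)
Definition span_lines_through (L : {set 'M[F]_n.+1}) (P : 'M[F]_n.+1) : 'M[F]_n.+1 :=
  <<(\sum_(l in L | (P <= l)%MS) l)%MS>>%MS.

End PG.

(* Main.v *)
Require Import Defs.
From mathcomp Require Import all_boot all_order all_algebra all_field.
From mathcomp Require Import zify.
Set Implicit Arguments. Unset Strict Implicit. Unset Printing Implicit Defensive.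
Import GRing.Theory.

Lemma canon_eq (F : finFieldType) n d (X Y : 'M[F]_n.+1) :
  psub d X -> psub d Y -> (X <= Y)%MS -> X = Y.
Proof.
case/andP=> /eqP gX /eqP rX /andP[/eqP gY /eqP rY] sXY.
rewrite -gX -gY; apply/genmxP.
by rewrite -(mxrank_leqif_eq sXY).2 rX rY.
Qed.

Lemma rank_cap_lt (F : finFieldType) n (A B : 'M[F]_n.+1) :
  ~~ (B <= A)%MS -> (\rank (A :&: B) < \rank B)%N.
Proof.
move=> nBA; rewrite (ltn_leqif (mxrank_leqif_sup (capmxSr A B))).
by rewrite sub_capmx submx_refl andbT.
Qed.

Lemma rank_sup_eq (F : finFieldType) n (A B : 'M[F]_n.+1) :
  (A <= B)%MS -> \rank B = \rank A -> (B <= A)%MS.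
Proof. by move=> sAB rBA; rewrite -(mxrank_leqif_sup sAB).2 rBA. Qed.

Lemma rank_line2 (F : finFieldType) n (l1 l2 P : 'M[F]_n.+1) :
  pline l1 -> pline l2 -> ppoint P -> (P <= l1)%MS -> (P <= l2)%MS ->
  l1 != l2 -> \rank (l1 + l2)%MS = 3.
Proof.
move=> h1 h2 hP P1 P2 n12.
have hc := mxrank_sum_cap l1 l2.
have c1 : (1 <= \rank (l1 :&: l2))%N.
  case/andP: hP => _ /eqP <-; apply: mxrankS; by rewrite sub_capmx P1.
have c2 : (\rank (l1 :&: l2) < \rank l2)%N.
  apply: rank_cap_lt; apply: contra n12 => s21.
  by rewrite (canon_eq h2 h1 s21).
move: h1 h2 => /andP[_ /eqP r1] /andP[_ /eqP r2].
rewrite r2 in c2; lia.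
Qed.

Lemma rank_pts (F : finFieldType) n (X Y : 'M[F]_n.+1) :
  ppoint X -> ppoint Y -> X != Y -> \rank (X + Y)%MS = 2.
Proof.
move=> hX hY nXY.
have hc := mxrank_sum_cap X Y.
have c2 : (\rank (X :&: Y) < \rank Y)%N.
  apply: rank_cap_lt; apply: contra nXY => s21.
  by rewrite (canon_eq hY hX s21).
move: hX hY => /andP[_ /eqP r1] /andP[_ /eqP r2].
rewrite r2 in c2; lia.
Qed.

Lemma line_through2 (F : finFieldType) n (l X Y : 'M[F]_n.+1) :
  pline l -> ppoint X -> ppoint Y -> X != Y -> (X <= l)%MS -> (Y <= l)%MS ->
  l = <<(X + Y)%MS>>%MS.
Proof.
move=> hl hX hY nXY Xl Yl.
have sl : (X + Y <= l)%MS by rewrite addsmx_sub Xl.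
have r := rank_pts hX hY nXY.
have e : (l <= X + Y)%MS.
  apply: rank_sup_eq sl _; rewrite r; by case/andP: hl => _ /eqP.
case/andP: hl => /eqP gl _; rewrite -gl; apply/genmxP; by rewrite e sl.
Qed.

Lemma card_sep (T : finType) (A : {set T}) (P : pred T) :
  #|[set x in A | P x]| = \sum_(x in A) (P x : nat).
Proof.
rewrite -sum1dep_card big_mkcondr /=; apply: eq_bigr => x _; by case: (P x).
Qed.

Lemma sub_gen (F : fieldType) m1 m2 n (A : 'M[F]_(m1, n)) (B : 'M[F]_(m2, n)) :
  (A <= <<B>>)%MS = (A <= B)%MS.
Proof. by rewrite genmxE. Qed.

Lemma gen_sub (F : fieldType) m1 m2 n (A : 'M[F]_(m1, n)) (B : 'M[F]_(m2, n)) :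
  (<<A>> <= B)%MS = (A <= B)%MS.
Proof. by rewrite genmxE. Qed.

Lemma planes_meet (F : finFieldType) n (Ea Eb S l m : 'M[F]_n.+1) :
  pplane Ea -> pplane Eb -> Ea != Eb -> (Ea <= S)%MS -> (Eb <= S)%MS ->
  (\rank S <= 4)%N -> pline l -> pline m -> (l <= Ea)%MS -> (l <= Eb)%MS ->
  (m <= Ea)%MS -> (m <= Eb)%MS -> m = l.
Proof.
move=> ha hb nab aS bS rS hl hm la lb ma mb.
have hc := mxrank_sum_cap Ea Eb.
have r1 : (\rank (Ea + Eb)%MS <= 4)%N.
  apply: leq_trans rS; apply: mxrankS; by rewrite addsmx_sub aS.
have c2 : (\rank (Ea :&: Eb) < \rank Eb)%N.
  apply: rank_cap_lt; apply: contra nab => s21.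
  by rewrite (canon_eq hb ha s21).
have lc : (l <= Ea :&: Eb)%MS by rewrite sub_capmx la.
have mc : (m <= Ea :&: Eb)%MS by rewrite sub_capmx ma.
have rc : \rank (Ea :&: Eb) = 2.
  move: ha hb => /andP[_ /eqP r1'] /andP[_ /eqP r2].
  rewrite r1' r2 in hc c2; clear -hc c2 r1; lia.
have cl : (Ea :&: Eb <= l)%MS.
  apply: rank_sup_eq lc _; rewrite rc; by case/andP: hl => _ /eqP.
exact: canon_eq hm hl (submx_trans mc cl).
Qed.

Lemma gen_psub (F : finFieldType) n d (A : 'M[F]_n.+1) :
  \rank A = d.+1 -> psub d <<A>>%MS.
Proof. by move=> r; rewrite /psub genmx_id eqxx mxrank_gen r eqxx. Qed.

Lemma plane_lemma (F : finFieldType) n q (L : {set 'M[F]_n.+1}) (P l1 l2 l3 : 'M[F]_n.+1) :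
  (1 < q)%N ->
  (forall l, l \in L -> pline l) ->
  (forall E, pplane E ->
     nlines_in L E = 0%N \/ nlines_in L E = 1%N \/ nlines_in L E = q.+1) ->
  (forall S, psolid S ->
     nlines_in L S = 0%N \/ nlines_in L S = 1%N \/ nlines_in L S = q.+1 \/
     nlines_in L S = (2 * q).+1) ->
  ppoint P -> l1 \in L -> l2 \in L -> l3 \in L -> l1 != l2 ->
  (P <= l1)%MS -> (P <= l2)%MS -> (P <= l3)%MS -> (l3 <= l1 + l2)%MS.
Proof.
move=> q2 Lline Pl Sd hP L1 L2 L3 n12 P1 P2 P3.
case: (boolP (l3 <= l1 + l2)%MS) => // n3; exfalso.
have h1 := Lline _ L1; have h2 := Lline _ L2; have h3 := Lline _ L3.
have n13 : l1 != l3 by apply: contra n3 => /eqP <-; rewrite addsmxSl.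
have n23 : l2 != l3 by apply: contra n3 => /eqP <-; rewrite addsmxSr.
set E12 := <<(l1 + l2)%MS>>%MS; set E13 := <<(l1 + l3)%MS>>%MS;
set E23 := <<(l2 + l3)%MS>>%MS; set S := <<(l1 + l2 + l3)%MS>>%MS.
have p12 : pplane E12 by apply: gen_psub; exact: rank_line2 h1 h2 hP P1 P2 n12.
have p13 : pplane E13 by apply: gen_psub; exact: rank_line2 h1 h3 hP P1 P3 n13.
have p23 : pplane E23 by apply: gen_psub; exact: rank_line2 h2 h3 hP P2 P3 n23.
have rS : \rank S = 4.
  rewrite mxrank_gen.
  have hc := mxrank_sum_cap (l1 + l2)%MS l3.
  have c1 : (1 <= \rank ((l1 + l2) :&: l3))%N.
    case/andP: hP => _ /eqP <-; apply: mxrankS.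
    by rewrite sub_capmx P3 (submx_trans P1) ?addsmxSl.
  have c2 := rank_cap_lt n3.
  rewrite (rank_line2 h1 h2 hP P1 P2 n12) in hc.
  move: h3 => /andP[_ /eqP r3]; rewrite r3 in hc c2; clear -hc c1 c2; lia.
have pS : psolid S by apply: gen_psub; rewrite -rS /S mxrank_gen.
have s12 : (E12 <= S)%MS by rewrite !genmxE addsmxSl.
have s13 : (E13 <= S)%MS.
  by rewrite !genmxE addsmx_sub addsmxSr (submx_trans _ (addsmxSl _ _)) ?addsmxSl.
have s23 : (E23 <= S)%MS.
  by rewrite !genmxE addsmx_sub addsmxSr (submx_trans _ (addsmxSl _ _)) ?addsmxSr.
have rS4 : (\rank S <= 4)%N by rewrite rS.
have l1_12 : (l1 <= E12)%MS by rewrite genmxE addsmxSl.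
have l2_12 : (l2 <= E12)%MS by rewrite genmxE addsmxSr.
have l1_13 : (l1 <= E13)%MS by rewrite genmxE addsmxSl.
have l3_13 : (l3 <= E13)%MS by rewrite genmxE addsmxSr.
have l2_23 : (l2 <= E23)%MS by rewrite genmxE addsmxSl.
have l3_23 : (l3 <= E23)%MS by rewrite genmxE addsmxSr.
have d1213 : E12 != E13.
  apply: contra n3 => /eqP e; move: l3_13; by rewrite -e genmxE.
have d1223 : E12 != E23.
  apply: contra n3 => /eqP e; move: l3_23; by rewrite -e genmxE.
have d1323 : E13 != E23.
  apply/negP => /eqP e; apply: (negP d1213); apply/eqP.
  apply: canon_eq p12 p13 _; rewrite genmxE addsmx_sub l1_13 /=; by rewrite e.
set A12 := [set l in L | (l <= E12)%MS].
set A13 := [set l in L | (l <= E13)%MS].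
set A23 := [set l in L | (l <= E23)%MS].
have cardA : forall E a b, pplane E -> a \in L -> b \in L -> a != b ->
    (a <= E)%MS -> (b <= E)%MS -> #|[set l in L | (l <= E)%MS]| = q.+1.
  move=> E a b pE aL bL nab aE bE.
  have : (1 < #|[set l in L | (l <= E)%MS]|)%N.
    apply/card_gt1P; exists a, b; by rewrite !inE aL bL aE bE.
  by case: (Pl E pE) => [|[|]]; rewrite /nlines_in => ->.
have c12 := cardA _ _ _ p12 L1 L2 n12 l1_12 l2_12.
have c13 := cardA _ _ _ p13 L1 L3 n13 l1_13 l3_13.
have c23 := cardA _ _ _ p23 L2 L3 n23 l2_23 l3_23.
have i1 : (#|A12 :&: A13| <= 1)%N.
  rewrite -(cards1 l1); apply: subset_leq_card; apply/subsetP => m.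
  rewrite !inE => /andP[/andP[mL m12] /andP[_ m13]]; apply/eqP.
  exact: planes_meet p12 p13 d1213 s12 s13 rS4 h1 (Lline _ mL) l1_12 l1_13 m12 m13.
have i2 : (#|(A12 :|: A13) :&: A23| <= 2)%N.
  apply: (@leq_trans #|[set l2; l3]|); last by rewrite cards2; case: (_ != _).
  apply: subset_leq_card; apply/subsetP => m.
  rewrite !inE => /andP[/orP[/andP[mL m1]|/andP[mL m1]] /andP[_ m2]]; apply/orP.
    left; apply/eqP.
    exact: planes_meet p12 p23 d1223 s12 s23 rS4 h2 (Lline _ mL) l2_12 l2_23 m1 m2.
  right; apply/eqP.
  exact: planes_meet p13 p23 d1323 s13 s23 rS4 h3 (Lline _ mL) l3_13 l3_23 m1 m2.
have sub : (A12 :|: A13 :|: A23) \subset [set l in L | (l <= S)%MS].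
  apply/subsetP => m; rewrite !inE => /orP[/orP[]|] /andP[-> mE] /=;
  exact: submx_trans mE _.
have u1 := cardsUI A12 A13.
have u2 := cardsUI (A12 :|: A13) A23.
have := subset_leq_card sub.
have := Sd S pS; rewrite /nlines_in.
rewrite /A12 /A13 /A23 in u1 u2 i1 i2 *; rewrite c12 c13 c23 in u1 u2.
move=> + Hs; clear -u1 u2 i1 i2 q2 Hs; move=> [e|[e|[e|e]]]; rewrite e in Hs; lia.
Qed.

Unset Implicit Arguments.

Theorem lemma8 (F : finFieldType) (n q : nat) (L : {set 'M[F]_n.+1})
  (M P : 'M[F]_n.+1) :
  #|F| = q ->
  L != set0 ->
  (forall l, l \in L -> pline l) ->
  (* (Pt) *)
  (forall X, ppoint X -> nlines_through L X = 0%N \/ nlines_through L X = q.+1) ->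
  (* (Pl) *)
  (forall E, pplane E ->
     nlines_in L E = 0%N \/ nlines_in L E = 1%N \/ nlines_in L E = q.+1) ->
  (* (Sd) *)
  (forall S, psolid S ->
     nlines_in L S = 0%N \/ nlines_in L S = 1%N \/ nlines_in L S = q.+1 \/
     nlines_in L S = (2 * q).+1) ->
  (* (To) *)
  (#|L| <= q ^ 5 + q ^ 4 + q ^ 3 + q ^ 2 + q + 1)%N ->
  psub 4 M ->
  qM_point q L M P ->
  (#|[set X | qM_point q L M X && (X <= span_lines_through L P)%MS]| <= q + 2)%N.
Proof.
move=> cardF _ Lline Pt Pl Sd _ psM qP.
have q2 : (1 < q)%N by rewrite -cardF card_finNzRing_gt1.
set pi := span_lines_through L P.
have qP' := qP; case/andP: qP' => pP /eqP cPM.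
set AP := [set l in L | (P <= l)%MS].
have cAP : #|AP| = q.+1.
  have : (q.+1 <= #|AP|)%N.
    rewrite -cPM; apply: subset_leq_card; apply/subsetP => l.
    by rewrite !inE => /andP[-> /andP[-> _]].
  by case: (Pt P pP); rewrite /nlines_through -/AP => -> //; rewrite ltnn.
have APM : forall l, l \in AP -> (l <= M)%MS.
  have sub : [set l in L | (P <= l)%MS && (l <= M)%MS] \subset AP.
    by apply/subsetP => l; rewrite !inE => /andP[-> /andP[-> _]].
  move=> l lA; have /(subset_cardP (etrans cPM (esym cAP))) e := sub.
  by move: lA; rewrite -e inE => /andP[_ /andP[_ ->]].
have l_pi : forall l, l \in AP -> (l <= pi)%MS.
  move=> l; rewrite inE => /andP[lL Pl']; rewrite /pi /span_lines_through genmxE.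
  by apply: (sumsmx_sup l) => //; rewrite lL.
have piM : (pi <= M)%MS.
  rewrite /pi /span_lines_through genmxE; apply/sumsmx_subP => l lP.
  by apply: APM; rewrite inE.
have [l1 [l2 [A1 A2 n12]]] : exists l1 l2, [/\ l1 \in AP, l2 \in AP & l1 != l2].
  by apply/card_gt1P; rewrite cAP ltnS ltnW.
have ppi : pplane pi.
  have e1 : (pi <= l1 + l2)%MS.
    rewrite /pi /span_lines_through genmxE; apply/sumsmx_subP => l /andP[lL Pl'].
    move: A1 A2; rewrite !inE => /andP[L1 P1] /andP[L2 P2].
    exact: (plane_lemma q2 Lline Pl Sd pP L1 L2 lL n12 P1 P2 Pl').
  have e2 : (l1 + l2 <= pi)%MS by rewrite addsmx_sub !l_pi.
  have r : \rank (l1 + l2)%MS = 3.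
    move: A1 A2; rewrite !inE => /andP[L1 P1] /andP[L2 P2].
    exact: rank_line2 (Lline _ L1) (Lline _ L2) pP P1 P2 n12.
  rewrite /pplane /psub /pi /span_lines_through genmx_id eqxx /=.
  rewrite -/(span_lines_through L P) -/pi; apply/eqP.
  have := mxrankS e1; have := mxrankS e2; rewrite r; clear; lia.
have piAP : forall l, l \in L -> (l <= pi)%MS -> (P <= l)%MS.
  have sub : AP \subset [set l in L | (l <= pi)%MS].
    by apply/subsetP => l lA; rewrite inE l_pi // andbT; move: lA; rewrite inE => /andP[].
  have c : #|[set l in L | (l <= pi)%MS]| = q.+1.
    have := subset_leq_card sub; rewrite cAP => h.
    case: (Pl pi ppi) => [|[|]]; rewrite /nlines_in => e; rewrite e in h *; move: h; clear -q2; lia.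
  move=> l lL lpi; have /(subset_cardP (etrans cAP (esym c))) e := sub.
  by have := e l; rewrite !inE lL lpi /= => ->.
set Xs := [set X | qM_point q L M X && (X <= pi)%MS && (X != P)].
suff cXs : (#|Xs| <= q.+1)%N.
  apply: (@leq_trans #|P |: Xs|).
    apply: subset_leq_card; apply/subsetP => X; rewrite !inE.
    by move=> h; rewrite h /= orbN.
  rewrite cardsU1; move: cXs; clear; case: (_ \notin _) => /=; lia.
set C := (M :\: pi)%MS.
have CM : (C <= M)%MS by apply: diffmxSl.
have Cpi : (C :&: pi)%MS = 0%R by apply: capmx_diff.
have rM : \rank M = 5 by case/andP: psM => _ /eqP.
have rpi : \rank pi = 3 by case/andP: ppi => _ /eqP.
have rC : \rank C = 2.
  have := mxrank_cap_compl M pi; rewrite (capmx_idPr piM) rM rpi -/C.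
  clear; lia.
have C0 : C != 0%R by rewrite -mxrank_eq0 rC.
set u := nz_row C.
have u0 : u != 0%R by rewrite nz_row_eq0.
have uC : (u <= C)%MS by apply: nz_row_sub.
have ru : \rank u = 1 by rewrite rank_rV u0.
set D := (C :\: u)%MS.
have rD : \rank D = 1.
  have := mxrank_cap_compl C u; rewrite (capmx_idPr uC) ru rC -/D; clear; lia.
set v := nz_row D.
have v0 : v != 0%R by rewrite nz_row_eq0 -mxrank_eq0 rD.
have vD : (v <= D)%MS by apply: nz_row_sub.
have vC : (v <= C)%MS := submx_trans vD (diffmxSl _ _).
have Du : (D :&: u)%MS = 0%R := capmx_diff C u.
have vu : ~~ (v <= u)%MS.
  apply/negP => h; move/negP: v0; apply; rewrite -submx0 -Du sub_capmx vD h.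
  done.
have Cuv : (C <= u + v)%MS.
  apply: rank_sup_eq; first by rewrite addsmx_sub uC.
  have := mxrank_sum_cap u v.
  have -> : \rank (u :&: v)%MS = 0.
    apply/eqP; rewrite mxrank_eq0 -submx0 -Du capmxC.
    by apply: capmxS => //; rewrite submx_refl.
  rewrite ru rank_rV v0 rC; clear; lia.
pose z (t : option F) : 'rV[F]_n.+1 := if t is Some s then (s *: u + v)%R else u.
have zC : forall t, (z t <= C)%MS.
  by case=> [s|] //=; rewrite addmx_sub // scalemx_sub.
have z0 : forall t, z t != 0%R.
  case=> [s|] //=; apply/negP => /eqP e; move/negP: vu; apply.
  have -> : v = (- (s *: u))%R by apply/eqP; rewrite -addr_eq0 addrC e.
  by rewrite -scaleNr scalemx_sub.
pose T t := <<(pi + z t)%MS>>%MS.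
have rT : forall t, \rank (T t) = 4.
  move=> t; rewrite mxrank_gen; have := mxrank_sum_cap pi (z t).
  have -> : \rank (pi :&: z t)%MS = 0.
    apply/eqP; rewrite mxrank_eq0 -submx0 -Cpi.
    by rewrite sub_capmx (submx_trans (capmxSr _ _) (zC t)) capmxSl.
  rewrite rpi rank_rV z0; clear; lia.
have pT : forall t, psolid (T t).
  by move=> t; apply: gen_psub; rewrite -mxrank_gen; apply: rT.
have piT : forall t, (pi <= T t)%MS by move=> t; rewrite /T sub_gen addsmxSl.
set B := [set l in L | (l <= M)%MS && ~~ (l <= pi)%MS && [exists X in Xs, (X <= l)%MS]].
have bT : forall t, (#|[set l in B | (l <= T t)%MS]| <= q)%N.
  move=> t; set Bt := [set l in B | _].
  have sub : AP :|: Bt \subset [set l in L | (l <= T t)%MS].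
    apply/subsetP => l; rewrite !inE => /orP[/andP[lL Pl']|/andP[/andP[lL _] lT]];
      rewrite lL //=.
    apply: submx_trans (piT t); apply: l_pi; by rewrite inE lL Pl'.
  have dis : AP :&: Bt = set0.
    apply/setP => l; rewrite !inE; apply/negP.
    move=> /andP[/andP[lL Pl'] /andP[/andP[_ /andP[/andP[_ npi] _]] _]].
    by rewrite l_pi ?inE ?lL in npi.
  have := cardsUI AP Bt; rewrite dis cards0 cAP.
  have := subset_leq_card sub; have := Sd _ (pT t); rewrite /nlines_in.
  move=> + h1 h2; clear -h1 h2; case=> [e|[e|[e|e]]]; rewrite e in h1; lia.
have cov : forall l, l \in B -> exists t, (l <= T t)%MS.
  move=> l; rewrite inE => /andP[lL /andP[/andP[lM npi] /existsP[X /andP[XXs Xl]]]].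
  move: XXs; rewrite inE /qM_point => /andP[/andP[/andP[pX _] Xpi] _].
  have rl : \rank l = 2 by case/andP: (Lline _ lL) => _ /eqP.
  have rpl : \rank (pi + l)%MS = 4.
    have := mxrank_sum_cap pi l.
    have c1 : (1 <= \rank (pi :&: l))%N.
      case/andP: pX => _ /eqP <-; apply: mxrankS; by rewrite sub_capmx Xl Xpi.
    have c2 := rank_cap_lt npi.
    rewrite rpi rl in c2 *; move: c1 c2; clear; lia.
  set K := ((pi + l) :&: C)%MS.
  have rK : (1 <= \rank K)%N.
    have := mxrank_sum_cap (pi + l)%MS C.
    have : (\rank ((pi + l) + C)%MS <= 5)%N.
      by rewrite -rM mxrankS // !addsmx_sub piM lM CM.
    rewrite rpl rC /K; clear; lia.
  set w := nz_row K.
  have w0 : w != 0%R by rewrite nz_row_eq0 -mxrank_eq0 -lt0n.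
  have wK : (w <= K)%MS := nz_row_sub K.
  have wpl : (w <= pi + l)%MS := submx_trans wK (capmxSl _ _).
  have wuv : (w <= u + v)%MS := submx_trans (submx_trans wK (capmxSr _ _)) Cuv.
  suff [t zt] : exists t, (z t <= w)%MS.
    exists t.
    have Tpl : (T t <= pi + l)%MS.
      by rewrite /T gen_sub addsmx_sub addsmxSl (submx_trans zt wpl).
    have plT := rank_sup_eq Tpl (etrans rpl (esym (rT t))).
    exact: submx_trans (addsmxSr pi l) plT.
  case/sub_addsmxP: wuv => [[a b]] /=.
  rewrite [a]mx11_scalar [b]mx11_scalar !mul_scalar_mx => we.
  have [b0|bn0] := eqVneq (b ord0 ord0) 0%R.
    rewrite b0 scale0r addr0 in we.
    have a0 : a ord0 ord0 != 0%R by apply: contra w0 => /eqP a0; rewrite we a0 scale0r.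
    exists None => /=.
    have -> : u = ((a ord0 ord0)^-1 *: w)%R by rewrite we scalerA mulVf // scale1r.
    by rewrite scalemx_sub.
  exists (Some (a ord0 ord0 / b ord0 ord0)%R) => /=.
  have -> : ((a ord0 ord0 / b ord0 ord0) *: u + v = (b ord0 ord0)^-1 *: w)%R.
    by rewrite we scalerDr !scalerA mulVf // scale1r mulrC.
  by rewrite scalemx_sub.
have c3 : forall X, X \in Xs -> (q <= #|[set l in B | (X <= l)%MS]|)%N.
  move=> X XXs; have XXs' := XXs.
  move: XXs'; rewrite inE /qM_point => /andP[/andP[/andP[pX /eqP cX] Xpi] nXP].
  set FX := [set l in L | (X <= l)%MS && (l <= M)%MS] in cX.
  have sub : FX \subset [set l in B | (X <= l)%MS] :|: [set <<(X + P)%MS>>%MS].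
    apply/subsetP => l; rewrite inE => /andP[lL /andP[Xl lM]].
    rewrite in_setU; case: (boolP (l <= pi)%MS) => lpi.
      apply/orP; right; rewrite inE; apply/eqP.
      exact: line_through2 (Lline _ lL) pX pP nXP Xl (piAP _ lL lpi).
    apply/orP; left; rewrite !inE lL lM lpi Xl /= andbT.
    by apply/existsP; exists X; rewrite XXs Xl.
  have := subset_leq_card sub; rewrite cX.
  have := cardsUI [set l in B | (X <= l)%MS] [set <<(X + P)%MS>>%MS].
  rewrite cards1; clear; lia.
have c4 : forall l, l \in B -> (#|[set X in Xs | (X <= l)%MS]| <= 1)%N.
  move=> l; rewrite inE => /andP[lL /andP[/andP[lM npi] _]].
  rewrite leqNgt; apply/negP => /card_gt1P [X [Y []]].
  rewrite !inE /qM_point.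
  move=> /andP[/andP[/andP[/andP[pX _] Xpi] _] Xl] /andP[/andP[/andP[/andP[pY _] Ypi] _] Yl] nXY.
  move/negP: npi; apply.
  by rewrite (line_through2 (Lline _ lL) pX pY nXY Xl Yl) gen_sub addsmx_sub Xpi Ypi.
have lo : (q * #|Xs| <= #|B|)%N.
  apply: (@leq_trans (\sum_(X in Xs) #|[set l in B | (X <= l)%MS]|)).
    rewrite mulnC -sum_nat_const; apply: leq_sum => X XXs; exact: c3.
  under eq_bigr => X _ do rewrite card_sep.
  rewrite exchange_big /= -sum1_card; apply: leq_sum => l lB.
  rewrite -card_sep; exact: c4.
have up : (#|B| <= q.+1 * q)%N.
  apply: (@leq_trans (\sum_(t : option F) #|[set l in B | (l <= T t)%MS]|)); last first.
    apply: (@leq_trans (\sum_(t : option F) q)); first by apply: leq_sum => t _; exact: bT.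
    by rewrite sum_nat_const card_option cardF.
  under eq_bigr => t _ do rewrite card_sep.
  rewrite exchange_big /= -sum1_card; apply: leq_sum => l lB.
  have [t lt] := cov l lB.
  by rewrite (bigD1 t) //= lt leq_addr.
have q0 : (0 < q)%N by apply: ltnW.
rewrite mulnC in up; have := leq_trans lo up.
by rewrite leq_pmul2l.
Qed.
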